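(* Let $f:\mathbb{R}^n\to\mathbb{R}$ be continuous and bounded with non-empty set of global minimizers $\mathfrak{M}$, and assume (E): there is $\beta>0$ such that for every $x\in\mathbb{R}^n$ there exist $\hat\alpha\in\mathcal{A}$ and a time $t(x)\in[0,\beta(f(x)-\underline{f})]$ with $y^{\hat\alpha}_x(t(x))\in\mathfrak{M}$. Then there exists a constant $\widetilde K>0$, independent of $\lambda$, such that for every $\lambda>0$, $\widetilde K\big(u_\lambda(x)-\underline{f}/\lambda\big)\le f(x)-\underline{f}$ for all $x\in\mathbb{R}^n$. In particular, for every $\lambda\in(0,\widetilde K)$, Assumption (B) holds with $K=\widetilde K$, i.e. $K>\lambda$ and $K\,\tilde u_\lambda\le\tilde f$ on $\mathbb{R}^n$.
   Context: $\underline{f}:=\inf f$, $\mathfrak{M}:=\{z: f(z)=\underline{f}\}$. Fix $M>\sqrt{6\sup|f|}$. $\mathcal{A}$: measurable $\alpha:[0,\infty)\to\mathbb{R}^n$ with $|\alpha(s)|\le M$. $y^\alpha_x(t)=x+\int_0^t\alpha$. For $\lambda>0$: $\mathscr{J}(x,\alpha)=\int_0^\infty(\tfrac12|\alpha(s)|^2+f(y^\alpha_x(s)))e^{-\lambda s}ds$, $u_\lambda=\inf_{\mathcal{A}}\mathscr{J}$. $\tilde f:=f-\underline{f}$, $\tilde u_\lambda:=u_\lambda-\underline{f}/\lambda$. *)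

(* Defs.v *)
From HB Require Import structures.
From mathcomp Require Import all_boot all_order all_algebra.
From mathcomp Require Import all_classical all_reals all_analysis.
Set Implicit Arguments. Unset Strict Implicit. Unset Printing Implicit Defensive.
Import Order.TTheory GRing.Theory Num.Theory.
Import numFieldNormedType.Exports.
Local Open Scope classical_set_scope.
Local Open Scope ring_scope.

Section Defs.
Variables (R : realType) (n : nat).

Definition enorm (v : 'rV[R]_n) : R := Num.sqrt (\sum_(i < n) (v ord0 i) ^+ 2).

Definition finf (f : 'rV[R]_n -> R) : R := inf (range f).
Definition fsupabs (f : 'rV[R]_n -> R) : R := sup (range (fun x => `|f x|)).
Definition minimizers (f : 'rV[R]_n -> R) : set 'rV[R]_n :=
  [set z | f z = finf f].

Definition admissible (M : R) (alpha : R -> 'rV[R]_n) : Prop :=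
  (forall i : 'I_n,
     measurable_fun (`[0%R, +oo[ : set R) (fun s => alpha s ord0 i)) /\
  (forall s, 0 <= s -> enorm (alpha s) <= M).

Definition traj (x : 'rV[R]_n) (alpha : R -> 'rV[R]_n) (t : R) : 'rV[R]_n :=
  x + \row_(i < n) Rintegral (@lebesgue_measure R) (`[0%R, t] : set R)
                     (fun s => alpha s ord0 i).

Definition cost (f : 'rV[R]_n -> R) (lambda : R) (x : 'rV[R]_n)
    (alpha : R -> 'rV[R]_n) : \bar R :=
  (\int[@lebesgue_measure R]_(s in (`[0%R, +oo[ : set R))
     ((2^-1 * enorm (alpha s) ^+ 2 + f (traj x alpha s))
        * expR (- (lambda * s)))%:E)%E.

Definition value_fun (f : 'rV[R]_n -> R) (M lambda : R) (x : 'rV[R]_n) : R :=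
  fine (ereal_inf [set cost f lambda x alpha | alpha in admissible M]).

End Defs.

(* Main.v *)
Require Import Defs.
From HB Require Import structures.
From mathcomp Require Import all_boot all_order all_algebra.
From mathcomp Require Import all_classical all_reals all_analysis.
From mathcomp Require Import ring lra.
Import Order.TTheory GRing.Theory Num.Theory.
Import numFieldNormedType.Exports.
Local Open Scope classical_set_scope.
Local Open Scope ring_scope.
Lemma le_integral_gen d (T : measurableType d) (R : realType)
  (mu : {measure set T -> \bar R}) (D : set T) (f g : T -> \bar R) :
  (forall x, D x -> (f x <= g x)%E) ->
  (\int[mu]_(x in D) f x <= \int[mu]_(x in D) g x)%E.
Proof.
move=> fg; rewrite (integralE _ _ f) (integralE _ _ g); apply: leeB.
- rewrite !ge0_integralE; [|by move=> *; exact: funepos_ge0..].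
  apply: ereal_sup_le => _ [h hf <-]; exists h => // x.
  apply: (le_trans (hf x)); rewrite /patch; case: ifP => // /[dup] xD _.
  by apply: (funepos_le (D:=D)) => // y yD; apply: fg; rewrite inE in yD.
- rewrite !ge0_integralE; [|by move=> *; exact: funeneg_ge0..].
  apply: ereal_sup_le => _ [h hf <-]; exists h => // x.
  apply: (le_trans (hf x)); rewrite /patch; case: ifP => // /[dup] xD _.
  by apply: (funeneg_le (D:=D)) => // y yD; apply: fg; rewrite inE in yD.
Qed.

Section S.
Variable R : realType.
Notation mu := (@lebesgue_measure R).

Lemma pdf_eq (l s : R) : 0 < l -> 0 <= s ->
  exponential_pdf l s = l * expR (- (l * s)).
Proof. by move=> l0 s0; rewrite (@exponential_pdfE _ l s s0) mulNr. Qed.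

Lemma integrable_exp (l c : R) : 0 < l ->
  mu.-integrable (`[0%R, +oo[ : set R) (fun s => (c * expR (- (l * s)))%:E).
Proof.
move=> l0.
have h : mu.-integrable (`[0%R, +oo[ : set R)
    (fun s => (c / l)%:E * (exponential_pdf l s)%:E)%E.
  apply: integrableZl => //.
  exact: (integrableS measurableT _ _ (integrable_exponential_pdf l0)).
apply: eq_integrable h => // s; rewrite inE /= in_itv /= andbT => s0.
by rewrite -EFinM pdf_eq// mulrA divfK// gt_eqF.
Qed.

Lemma integral_exp (l c : R) : 0 < l ->
  (\int[mu]_(s in (`[0%R, +oo[ : set R)) ((c * expR (- (l * s)))%:E) = (c / l)%:E)%E.
Proof.
move=> l0.
transitivity (\int[mu]_(s in (`[0%R, +oo[ : set R)) ((c / l)%:E * (exponential_pdf l s)%:E))%E.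
  apply: eq_integral => s; rewrite inE /= in_itv /= andbT => s0.
  by rewrite -EFinM pdf_eq// mulrA divfK// gt_eqF.
rewrite integralZl//; last first.
  exact: (integrableS measurableT _ _ (integrable_exponential_pdf l0)).
rewrite integral_mkcond.
have -> : ((fun s => (exponential_pdf l s)%:E) \_ (`[0%R, +oo[ : set R))
    = (fun s => (exponential_pdf l s)%:E).
  apply/funext => s; rewrite /patch; case: ifPn => // /negP.
  rewrite inE /= in_itv /= andbT => /negP; rewrite -ltNge => s0.
  by rewrite lt0_exponential_pdf.
by rewrite integral_exponential_pdf// mule1.
Qed.

Lemma integral_ind (C t : R) : 0 <= t ->
  (\int[mu]_(s in (`[0%R, +oo[ : set R)) ((C * \1_(`[0%R, t] : set R) s)%:E) = (C * t)%:E)%E.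
Proof.
move=> t0.
transitivity (\int[mu]_(s in (`[0%R, +oo[ : set R)) (C%:E * (\1_(`[0%R, t] : set R) s)%:E))%E.
  by apply: eq_integral => s _; rewrite EFinM.
rewrite integralZl//; last first.
  exact: (integrableS measurableT _ _ (@integrable_indic_itv R 0 t true false)).
rewrite integral_indic//.
rewrite setIidl; last by move=> u /=; rewrite !in_itv/= => /andP[-> _].
transitivity (C%:E * t%:E)%E; last by rewrite EFinM.
congr (_ * _)%E.
apply: etrans; first exact: (@lebesgue_measure_itv R `[0%R, t]).
rewrite /= lte_fin; case: ltgtP t0 => // [tp _|<- _]; first by rewrite sube0.
done.
Qed.

Lemma integrable_ind (C t : R) :
  mu.-integrable (`[0%R, +oo[ : set R) (fun s => (C * \1_(`[0%R, t] : set R) s)%:E).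
Proof.
have h : mu.-integrable (`[0%R, +oo[ : set R)
    (fun s => C%:E * (\1_(`[0%R, t] : set R) s)%:E)%E.
  apply: integrableZl => //.
  exact: (integrableS measurableT _ _ (@integrable_indic_itv R 0 t true false)).
by apply: eq_integrable h => // s _; rewrite EFinM.
Qed.

Variable n : nat.
Implicit Types (f : 'rV[R]_n -> R).

Lemma cost_lb f (l : R) x (a : R -> 'rV[R]_n) : 0 < l ->
  (forall y, finf f <= f y) -> ((finf f / l)%:E <= cost f l x a)%E.
Proof.
move=> l0 fb; rewrite -integral_exp// /cost.
apply: le_integral_gen => s _; rewrite lee_fin.
rewrite ler_wpM2r ?expR_ge0//.
by rewrite -[finf f]add0r lerD// mulr_ge0// ?invr_ge0// sqr_ge0.
Qed.

Lemma enorm0 : enorm (0 : 'rV[R]_n) = 0.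
Proof.
rewrite /enorm big1 ?sqrtr0// => i _; by rewrite mxE expr0n.
Qed.

Lemma enorm_ge0 (v : 'rV[R]_n) : 0 <= enorm v.
Proof. exact: sqrtr_ge0. Qed.

Definition stopc (a : R -> 'rV[R]_n) (t : R) (s : R) : 'rV[R]_n :=
  if s <= t then a s else 0.

Lemma traj_stop x a t s : 0 <= t -> t <= s ->
  traj x (stopc a t) s = traj x a t.
Proof.
move=> t0 ts; rewrite /traj; congr (_ + _); apply/rowP => i; rewrite !mxE.
rewrite /Rintegral; congr fine.
transitivity (\int[mu]_(u in ((`[0%R, s] : set R) `&` (`[0%R, t] : set R))) (a u ord0 i)%:E)%E.
  rewrite integral_mkcondr; apply: eq_integral => u.
  rewrite inE /= in_itv /= => /andP[u0 us].
  rewrite /patch /stopc; case: ifPn.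
    by move=> ut; rewrite ifT //; apply/mem_set; rewrite /= in_itv /= u0 ut.
  move=> /negbTE ut; rewrite ifF ?mxE //.
  by apply/negbTE/negP => /set_mem /=; rewrite in_itv /= ut andbF.
by rewrite setIidr // => u /=; rewrite !in_itv /= => /andP[-> ut]; exact: le_trans ut ts.
Qed.

Lemma stopc_adm M a t : admissible M a -> 0 <= M -> admissible M (stopc a t).
Proof.
move=> [ma ba] M0; split.
  move=> i.
  have -> : (fun s => stopc a t s ord0 i) = (fun s => a s ord0 i) \_ (`]-oo, t] : set R).
    apply/funext => s; rewrite /stopc /patch; case: ifPn => st.
      by rewrite ifT //; apply/mem_set; rewrite /= in_itv /= st.
    rewrite ifF ?mxE //; apply/negbTE/negP => /set_mem /=.
    by rewrite in_itv /= (negbTE st).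
  apply/measurable_restrict => //.
  exact: measurable_funS (ma i).
move=> s s0; rewrite /stopc; case: ifP => _; first exact: ba.
by rewrite enorm0.
Qed.


Lemma cost_ub f (l : R) x a t M B : 0 < l -> 0 <= t ->
  (forall y, f y <= B) -> (forall y, finf f <= f y) -> - B <= finf f ->
  (forall s, 0 <= s -> enorm (a s) <= M) -> minimizers f (traj x a t) ->
  (cost f l x (stopc a t) <= (finf f / l + (M ^+ 2 / 2 + 2 * B) * t)%:E)%E.
Proof.
move=> l0 t0 fB flb Bf aM mt.
rewrite EFinD -integral_exp// -integral_ind// -integralD//; last first.
- exact: integrable_ind.
- exact: integrable_exp.
apply: le_integral_gen => s /=; rewrite in_itv /= andbT => s0.
rewrite -EFinD lee_fin.
have E0 : 0 < expR (- (l * s)) by exact: expR_gt0.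
have E1 : expR (- (l * s)) <= 1 by rewrite expR_le1 oppr_le0 mulr_ge0// ltW.
rewrite /stopc; case: ifPn => st.
  have -> : \1_(`[0%R, t] : set R) s = 1 :> R.
    by rewrite indicE mem_set //= in_itv /= s0 st.
  have e0 := enorm_ge0 (a s); have eM := aM s s0.
  have e2 : enorm (a s) ^+ 2 <= M ^+ 2 by rewrite lerXn2r// ?nnegrE// (le_trans e0).
  have fy := fB (traj x (stopc a t) s); have fl := flb (traj x (stopc a t) s).
  rewrite /stopc in fy fl.
  set e := enorm (a s) in e0 eM e2 *; set E := expR _ in E0 E1 *.
  set F := f _ in fy fl *.
  have hb : 0 <= 2^-1 * e ^+ 2 + F - finf f.
    by rewrite -addrA addr_ge0 ?subr_ge0// mulr_ge0// sqr_ge0.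
  have h2 : 0 <= 1 - E by rewrite subr_ge0.
  have := mulr_ge0 hb h2.
  rewrite mulr1; nra.
have -> : \1_(`[0%R, t] : set R) s = 0 :> R.
  by rewrite indicE memNset //= in_itv /= (negbTE st) andbF.
have ts : t <= s by rewrite ltW // ltNge.
have -> : (fun s0 => if s0 <= t then a s0 else 0) = stopc a t by [].
rewrite traj_stop// enorm0 mt.
by rewrite expr0n /= mulr0 add0r mulr0 addr0.
Qed.

End S.
Arguments stopc {R n}.

Theorem mainTheorem14 (R : realType) (n : nat) (f : 'rV[R]_n -> R) (M : R)
  (f_cont : continuous f)
  (f_bnd : exists C : R, forall x, `|f x| <= C)
  (M_big : Num.sqrt (6 * fsupabs f) < M)
  (Mne : minimizers f !=set0)
  (E : exists beta : R, 0 < beta /\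
     forall x : 'rV[R]_n, exists alpha : R -> 'rV[R]_n,
       admissible M alpha /\
       exists t : R, 0 <= t /\ t <= beta * (f x - finf f) /\
         minimizers f (traj x alpha t)) :
  exists Kt : R, 0 < Kt /\
    (forall lambda : R, 0 < lambda -> forall x : 'rV[R]_n,
       Kt * (value_fun f M lambda x - finf f / lambda) <= f x - finf f) /\
    (forall lambda : R, 0 < lambda < Kt ->
       lambda < Kt /\ forall x : 'rV[R]_n,
       Kt * (value_fun f M lambda x - finf f / lambda) <= f x - finf f).
Proof.
have [B hB] := f_bnd.
have fB y : f y <= B by have := hB y; rewrite ler_norml => /andP[].
have fB' y : - B <= f y by have := hB y; rewrite ler_norml => /andP[].
have B0 : 0 <= B by apply: le_trans (hB 0); exact: normr_ge0.
have M0 : 0 <= M by apply: ltW; apply: le_lt_trans M_big; exact: sqrtr_ge0.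
have hlb : has_lbound (range f) by exists (- B) => _ [y _ <-].
have flb y : finf f <= f y by apply: ge_inf => //; exists y.
have Bf : - B <= finf f.
  by apply: lb_le_inf; [exists (f 0), 0 | move=> _ [y _ <-]].
have [beta [beta0 hE]] := E.
set C0 := M ^+ 2 / 2 + 2 * B.
have C00 : 0 <= C0 by rewrite addr_ge0// ?mulr_ge0// ?sqr_ge0// invr_ge0.
set C := C0 + 1.
have C0' : 0 < C by rewrite ltr_pwDr.
have Kt0 : 0 < (C * beta)^-1 by rewrite invr_gt0 mulr_gt0.
have main : forall lambda : R, 0 < lambda -> forall x : 'rV[R]_n,
    (C * beta)^-1 * (value_fun f M lambda x - finf f / lambda) <= f x - finf f.
  move=> l l0 x.
  have [a [adm [t [t0 [tle mt]]]]] := hE x.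
  set S := [set cost f l x alpha | alpha in admissible M].
  have lb : ((finf f / l)%:E <= ereal_inf S)%E.
    by apply/ereal_infP => _ [al _ <-]; exact: cost_lb.
  have ub : (ereal_inf S <= (finf f / l + C0 * t)%:E)%E.
    apply: ge_ereal_inf; exists (cost f l x (stopc a t)).
      by exists (stopc a t) => //; exact: stopc_adm.
    by apply: cost_ub => //; case: adm.
  rewrite /value_fun -/S.
  move: lb ub; case: (ereal_inf S) => [r | |] //= lb ub.
  rewrite lee_fin in lb; rewrite lee_fin in ub.
  have fx0 : 0 <= f x - finf f by rewrite subr_ge0.
  have h1 : r - finf f / l <= C * beta * (f x - finf f).
    apply: (le_trans (y := C0 * t)); first by rewrite lerBlDl.
    rewrite -mulrA; apply: (le_trans (y := C * t)).
      by rewrite ler_wpM2r// lerDl.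
    by rewrite ler_wpM2l// ltW.
  apply: (le_trans (ler_wpM2l (ltW Kt0) h1)).
  by rewrite mulrA mulVf ?mul1r// gt_eqF// mulr_gt0.
exists (C * beta)^-1; split => //; split => // l /andP[l0 lK].
by split => //; exact: main.
Qed.
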